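(* Let $\Delta=(\alpha_1,\dots,\alpha_N)$ be ordered and let $B$ be the associated set of bases (defined below). For $b=(\beta_1,\dots,\beta_r)\in B$, listed in increasing order of indices, consider the linear form $$\phi^b:=Res_{\beta_1}\circ Res_{\beta_2}\circ\cdots\circ Res_{\beta_r}:S_\Delta\to k,$$ where $Res_{\beta_r}$ is applied first and each subsequent $\beta_i$ denotes its image in the successive quotient space. Then $(\phi^b)_{b\in B}$ is the dual basis of $(\phi_b)_{b\in B}$: for all $b,b'\in B$, $$\phi^b(\phi_{b'})=1\ \text{if } b=b',\qquad \phi^b(\phi_{b'})=0\ \text{otherwise}.$$
   Context: Let $k$ be a field of characteristic zero. For a finite-dimensional $k$-vector space $W$ of dimension $d$ and a finite set $\Lambda\subset W$ of nonzero vectors spanning $W$, let $S_\Lambda$ be the $k$-span of the rational functions $\phi_\sigma=1/\prod_{\alpha\in\sigma}\alpha$ on $W^*$, for $\sigma\subset\Lambda$ a basis of $W$. For $W=0$, $\Lambda=\emptyset$, we have $S_\emptyset=k$. For $\alpha\in\Lambda$, let $\Lambda/\alpha$ be the image of $\Lambda\setminus k\alpha$ in $W/k\alpha$; it spans $W/k\alpha$. Every $\phi\in S_\Lambda$ has at most a simple pole along the hyperplane $\{\alpha=0\}\subset W^*$, which is identified with $(W/k\alpha)^*$. Define $Res_\alpha:S_\Lambda\to S_{\Lambda/\alpha}$ by $Res_\alpha(\phi)=(\alpha\phi)|_{\{\alpha=0\}}$. Now let $V$ be a $k$-vector space of dimension $r$ and $\Delta=(\alpha_1,\dots,\alpha_N)$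 an ordered finite set of nonzero vectors spanning $V$. $B$ is the set of ordered bases $b=(\alpha_{i_1},\dots,\alpha_{i_r})$, $i_1<\dots<i_r$, of $V$ with elements in $\Delta$, such that for every $j\notin\{i_1,\dots,i_r\}$ the set $\{\alpha_j\}\cup\{\alpha_{i_p}:i_p>j\}$ is linearly independent. It is known that $(\phi_b)_{b\in B}$ is a basis of $S_\Delta$. For $b=(\beta_1,\dots,\beta_r)$, the composite $Res_{\beta_1}\circ\cdots\circ Res_{\beta_r}$ means: first $Res_{\beta_r}:S_\Delta\to S_{\Delta/\beta_r}$, then $Res$ along the image of $\beta_{r-1}$ in $V/k\beta_r$, and so on, ending in $S_\emptyset=k$. *)

(* Defs.v *)
From HB Require Import structures.
From mathcomp Require Import all_boot all_order all_algebra.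
From mathcomp Require Import mpoly fraction.
From Stdlib Require Import ClassicalEpsilon.

Set Implicit Arguments.
Unset Strict Implicit.
Unset Printing Implicit Defensive.

Import Order.TTheory GRing.Theory Num.Theory.
Notation "x %:F" := (@FracField.tofrac _ x) : ring_scope.
Local Open Scope ring_scope.

(* A d-dimensional k-vector space W is 'rV[k]_d.  Polynomial
   functions on W^* = k^d are {mpoly k[d]} (coordinates 'X_i), so a vector
   alpha in W is the linear form  lin alpha = sum_i alpha_i 'X_i  on W^*.
   Rational functions on W^* form the fraction field {fraction {mpoly k[d]}}.
   A quotient W -> W' (w |-> w *m p, p : 'M_(d,d')) induces the pullback
   W'^* -> W^* and the restriction of polynomial functions
   Sym(W) -> Sym(W'), 'X_i |-> lin (row i p).                                 *)

Section Defs.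
Variable k : fieldType.

Definition lin (d : nat) (a : 'rV[k]_d) : {mpoly k[d]} :=
  \sum_(i < d) a 0 i *: 'X_i.

Definition prestr (d d' : nat) (p : 'M[k]_(d, d')) (P : {mpoly k[d]})
  : {mpoly k[d']} :=
  P \mPo [tuple lin (row i p) | i < d].

(* restriction of a rational function along p (defined when the function has
   no pole along the subspace; the value is then independent of the chosen
   representation P/Q with restricted denominator nonzero; junk 0 otherwise) *)
Definition frestr (d d' : nat) (p : 'M[k]_(d, d'))
  (f : {fraction {mpoly k[d]}}) : {fraction {mpoly k[d']}} :=
  epsilon (inhabits 0) (fun g => exists P Q : {mpoly k[d]},
    [/\ prestr p Q != 0, f = P%:F / Q%:F &
        g = (prestr p P)%:F / (prestr p Q)%:F]).

Definition is_quot (d d' : nat) (a : 'rV[k]_d) (p : 'M[k]_(d, d')) : bool :=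
  (kermx p == a)%MS && row_full p.

Definition qmap (d : nat) (a : 'rV[k]_d) : 'M[k]_(d, d.-1) :=
  epsilon (inhabits 0) (fun p => is_quot a p).

Definition Res (d : nat) (a : 'rV[k]_d) (f : {fraction {mpoly k[d]}})
  : {fraction {mpoly k[d.-1]}} :=
  frestr (qmap a) ((lin a)%:F * f).

(* S_empty = k : value of a (constant) rational function in 0 variables *)
Definition cval (f : {fraction {mpoly k[0]}}) : k :=
  epsilon (inhabits 0) (fun c => f = (c%:MP)%:F).

(* iterated residue Res_{b_1} o ... o Res_{b_m}: Res along the LAST vector
   is applied first, then the remaining vectors are pushed to the quotient. *)
Fixpoint ires (n d : nat) (bs : seq 'rV[k]_d) (f : {fraction {mpoly k[d]}})
  {struct n} : k :=
  match n with
  | 0 => match d as d0 return {fraction {mpoly k[d0]}} -> k with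
         | 0 => fun f0 => cval f0
         | _.+1 => fun _ => 0
         end f
  | n'.+1 =>
      let a := last 0 bs in
      ires n' [seq v *m qmap a | v <- take (size bs).-1 bs] (Res a f)
  end.

Definition phi (d : nat) (s : seq 'rV[k]_d) : {fraction {mpoly k[d]}} :=
  ((\prod_(a <- s) lin a)%:F)^-1.

Definition inB (r : nat) (D : seq 'rV[k]_r) (b : seq nat) : bool :=
  [&& sorted ltn b, all (fun i => (i < size D)%N) b,
      basis_of fullv [seq D`_i | i <- b] &
      all (fun j => (j \in b) ||
             free (D`_j :: [seq D`_i | i <- b & (j < i)%N])) (iota 0 (size D))].

Definition phiup (r : nat) (D : seq 'rV[k]_r) (b : seq nat)
  (f : {fraction {mpoly k[r]}}) : k :=
  ires (size b) [seq D`_i | i <- b] f.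

Definition phib (r : nat) (D : seq 'rV[k]_r) (b : seq nat)
  : {fraction {mpoly k[r]}} := phi [seq D`_i | i <- b].

End Defs.

(* Main.v *)
Require Import Defs.
From HB Require Import structures.
From mathcomp Require Import all_boot all_order all_algebra.
From mathcomp Require Import mpoly fraction.
From Stdlib Require Import ClassicalEpsilon.
Set Implicit Arguments.
Unset Strict Implicit.
Unset Printing Implicit Defensive.
Import Order.TTheory GRing.Theory Num.Theory.
Local Open Scope ring_scope.
Lemma lin0 (k : fieldType) d : lin (0 : 'rV[k]_d) = 0.
Proof. by rewrite /lin big1 // => i _; rewrite mxE scale0r. Qed.

Lemma lin_eq0 (k : fieldType) d (v : 'rV[k]_d) : (lin v == 0) = (v == 0).
Proof.
apply/eqP/eqP => [h|->]; last exact: lin0.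
apply/rowP => j; rewrite mxE.
have := congr1 (mcoeff U_(j)%MM) h; rewrite mcoeff0 /lin raddf_sum /=.
rewrite (bigD1 j) //= big1 ?addr0 => [|i ij].
  by rewrite mcoeffZ mcoeffX eqxx mulr1.
rewrite mcoeffZ mcoeffX; case: eqP => [e|]; last by rewrite mulr0.
have := congr1 (fun m : 'X_{1..d} => m i) e; rewrite !mnm1E eqxx eq_sym (negPf ij) //.
Qed.

Lemma prestr_lin (k : fieldType) d d' (p : 'M[k]_(d,d')) (v : 'rV[k]_d) :
  prestr p (lin v) = lin (v *m p).
Proof.
rewrite /prestr /lin raddf_sum /=.
under eq_bigr => i _ do rewrite comp_mpolyZ comp_mpolyXU -tnth_nth tnth_map tnth_ord_tuple.
rewrite /lin.
under eq_bigr => i _ do rewrite raddf_sum /=.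
rewrite exchange_big /=; apply: eq_bigr => j _.
rewrite !mxE scaler_suml; apply: eq_bigr => i _.
by rewrite mxE scalerA.
Qed.
Lemma prestrM (k : fieldType) d d' (p : 'M[k]_(d,d')) P Q :
  prestr p (P * Q) = prestr p P * prestr p Q.
Proof. by rewrite /prestr rmorphM. Qed.
Lemma prestr1 (k : fieldType) d d' (p : 'M[k]_(d,d')) : prestr p 1 = 1.
Proof. by rewrite /prestr rmorph1. Qed.
Lemma prestr0 (k : fieldType) d d' (p : 'M[k]_(d,d')) : prestr p 0 = 0.
Proof. by rewrite /prestr raddf0. Qed.

Lemma frestrE (k : fieldType) d d' (p : 'M[k]_(d,d')) (P Q : {mpoly k[d]}) :
  prestr p Q != 0 ->
  frestr p (P%:F / Q%:F) = (prestr p P)%:F / (prestr p Q)%:F.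
Proof.
move=> hQ; rewrite /frestr.
set S := (fun g => _).
have : exists g, S g by exists ((prestr p P)%:F / (prestr p Q)%:F); exists P, Q.
move=> /(epsilon_spec (inhabits 0)) [P' [Q' [hQ' e ->]]].
have Q0 : Q != 0 by apply: contraNneq hQ => ->; rewrite prestr0.
have Q'0 : Q' != 0 by apply: contraNneq hQ' => ->; rewrite prestr0.
have hQF : Q%:F != 0 by rewrite tofrac_eq0.
have hQ'F : Q'%:F != 0 by rewrite tofrac_eq0.
have e2 : P * Q' = P' * Q.
  apply/eqP; rewrite -tofrac_eq !tofracM -(eqr_div _ _ hQF hQ'F) e; exact: eqxx.
have e3 := congr1 (fun x => (prestr p x)%:F) e2.
rewrite /= !prestrM !tofracM in e3.
have hPQF : (prestr p Q)%:F != 0 by rewrite tofrac_eq0.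
have hPQ'F : (prestr p Q')%:F != 0 by rewrite tofrac_eq0.
apply/eqP; rewrite (eqr_div _ _ hPQ'F hPQF) e3; exact: eqxx.
Qed.
Lemma frestr0 (k : fieldType) d d' (p : 'M[k]_(d,d')) : frestr p 0 = 0.
Proof.
have -> : (0 : {fraction {mpoly k[d]}}) = (0 : {mpoly k[d]})%:F / (1 : {mpoly k[d]})%:F.
  by rewrite tofrac0 mul0r.
by rewrite frestrE ?prestr1 ?oner_neq0 // prestr0 tofrac0 mul0r.
Qed.

Lemma cvalE (k : fieldType) (c : k) : cval ((c%:MP : {mpoly k[0]})%:F) = c.
Proof.
rewrite /cval; set S := (fun _ => _).
have : exists c', S c' by exists c.
move=> /(epsilon_spec (inhabits 0)); rewrite /S => /eqP.
by rewrite tofrac_eq mpolyC_eq => /eqP.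
Qed.

Lemma ires0 (k : fieldType) n d (bs : seq 'rV[k]_d) : ires n bs 0 = 0.
Proof.
elim: n d bs => [|n IH] [|d] bs //=.
  by have := cvalE (0 : k); rewrite tofrac0 => ->.
by rewrite /Res mulr0 frestr0 IH.
by rewrite /Res mulr0 frestr0 IH.
Qed.

Lemma prestr_prod (k : fieldType) d d' (p : 'M[k]_(d,d')) (s : seq 'rV[k]_d) :
  prestr p (\prod_(v <- s) lin v) = \prod_(w <- map (fun v => v *m p) s) lin w.
Proof.
rewrite big_map /prestr rmorph_prod; apply: eq_bigr => v _.
exact: prestr_lin.
Qed.

Lemma R1 (k : fieldType) d d' (p : 'M[k]_(d,d')) (a : 'rV[k]_d) s :
  a != 0 -> (forall v, v \in s -> v *m p != 0) ->
  frestr p ((lin a)%:F * phi (a :: s)) = phi (map (fun v => v *m p) s).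
Proof.
move=> a0 hs; rewrite /phi big_cons tofracM invfM mulrA divff ?mul1r; last first.
  by rewrite tofrac_eq0 lin_eq0.
rewrite -[X in frestr p X]mul1r -tofrac1 frestrE ?prestr1 ?tofrac1 ?mul1r ?prestr_prod //.
rewrite prodf_seq_neq0; apply/allP => w /mapP [v vs ->] /=.
by rewrite (lin_eq0 (v *m p)) hs.
Qed.

Lemma R0 (k : fieldType) d d' (p : 'M[k]_(d,d')) (a : 'rV[k]_d) s :
  a *m p = 0 -> (forall v, v \in s -> v *m p != 0) ->
  frestr p ((lin a)%:F * phi s) = 0.
Proof.
move=> ap hs; rewrite /phi frestrE.
  by rewrite prestr_lin ap lin0 tofrac0 mul0r.
rewrite prestr_prod prodf_seq_neq0; apply/allP => w /mapP [v vs ->] /=.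
by rewrite (lin_eq0 (v *m p)) hs.
Qed.
Lemma exists_quot (k : fieldType) n (a : 'rV[k]_n.+1) :
  a != 0 -> exists p : 'M[k]_(n.+1, n), is_quot a p.
Proof.
move=> a0; set A := cokermx a.
have rA : \rank A = n by rewrite mxrank_coker rank_rV a0 subn1.
suff H : forall m (E : \rank A = m), is_quot a (castmx (erefl, E) (col_base A)).
  by exists (castmx (erefl, rA) (col_base A)); exact: H.
move=> m E; case: m / E; rewrite castmx_id.
have aker : (a <= kermx (col_base A))%MS.
  rewrite sub_kermx; apply/eqP; apply: (row_free_inj (row_base_free A)).
  by rewrite mul0mx -mulmxA mulmx_base mulmx_coker.
rewrite /is_quot col_base_full andbT.
have rC : \rank (col_base A) = \rank A by apply/eqP; exact: col_base_full.
have rK : \rank (kermx (col_base A)) = 1%N by rewrite mxrank_ker rC rA subSnn.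
have := mxrank_leqif_eq aker.
rewrite rK rank_rV a0 => /leqif_refl.
by move=> /andP[-> ->].
Qed.

Lemma qmapP (k : fieldType) n (a : 'rV[k]_n.+1) : a != 0 -> is_quot a (qmap a).
Proof. by move=> /exists_quot h; exact: (@epsilon_spec _ (inhabits 0) (fun p => is_quot a p)). Qed.

Lemma kerP (k : fieldType) d d' (a : 'rV[k]_d) (p : 'M[k]_(d,d')) :
  is_quot a p -> forall w : 'rV_d, (w *m p == 0) = (w <= a)%MS.
Proof.
move=> /andP[/andP[h1 h2] _] w; rewrite -sub_kermx.
by apply/idP/idP => h; [exact: submx_trans h h1 | exact: submx_trans h h2].
Qed.
Lemma P1 (k : fieldType) d (u v : 'rV[k]_d) s x :
  free (u :: s) -> v \in s -> u = x *: v -> False.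
Proof.
by rewrite free_cons => /andP[hu _] vs e; move: hu; rewrite e memvZ // memv_span.
Qed.

Lemma P2 (k : fieldType) d (u v : 'rV[k]_d) s x :
  free (u :: s) -> v \in s -> v = x *: u -> False.
Proof.
move=> fr vs e; have [x0|x0] := eqVneq x 0.
  move: fr; rewrite free_cons => /andP[_ /free_not0 /(_ vs)].
  by rewrite e x0 scale0r eqxx.
apply: (P1 fr vs (x := x^-1)); by rewrite e scalerA mulVf // scale1r.
Qed.

Lemma Q1 (k : fieldType) d d' (p : 'M[k]_(d,d')) (a : 'rV[k]_d) :
  (forall w, w *m p = 0 -> exists x, w = x *: a) ->
  forall vs, free (a :: vs) -> free (map (fun v => v *m p) vs).
Proof.
move=> hker; elim=> [|v vs IH] fr; first by rewrite nil_free.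
have fr2 : free (v :: a :: vs).
  rewrite (perm_free (_ : perm_eq _ (a :: v :: vs))) //.
  by apply/permP => q /=; rewrite addnCA.
have fr3 : free (a :: vs) by move: fr2; rewrite free_cons => /andP[_].
rewrite /= free_cons IH // andbT.
apply/negP => h.
have e := coord_span (X := in_tuple (map (fun v => v *m p) vs)) h.
set X := in_tuple _ in e; set c := coord X in e.
pose w := \sum_(i < size X) c i (v *m p) *: vs`_i.
have ew : w *m p = v *m p.
  rewrite e /w mulmx_suml; apply: eq_bigr => i _.
  rewrite -scalemxAl; congr (_ *: _).
  have hi : (i < size vs)%N := leq_trans (ltn_ord i) (eq_leq (size_map _ _)).
  by rewrite /= (nth_map 0).
have [x ex] : exists x, v - w = x *: a.
  by apply: hker; rewrite mulmxBl ew subrr.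
move: fr2; rewrite free_cons => /andP[/negP hv _]; apply: hv.
have -> : v = x *: a + w by rewrite -ex subrK.
apply: rpredD; first by apply: memvZ; apply: memv_span; exact: mem_head.
apply: rpred_sum => i _; apply: memvZ; apply: memv_span.
rewrite inE; apply/orP; right; apply: mem_nth.
exact: leq_trans (ltn_ord i) (eq_leq (size_map _ _)).
Qed.

Lemma hker (k : fieldType) n (a : 'rV[k]_n.+1) : a != 0 ->
  forall w, w *m qmap a = 0 -> exists x, w = x *: a.
Proof. by move=> a0 w /eqP; rewrite (kerP (qmapP a0)) => /sub_rVP. Qed.

Lemma hker2 (k : fieldType) n (a : 'rV[k]_n.+1) : a != 0 ->
  forall w, w *m qmap a = 0 <-> exists x, w = x *: a.
Proof.
move=> a0 w; split; first exact: hker.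
by move=> h; apply/eqP; rewrite (kerP (qmapP a0)); apply/sub_rVP.
Qed.

Lemma phi_perm (k : fieldType) d (s t : seq 'rV[k]_d) : perm_eq s t -> phi s = phi t.
Proof. by move=> h; rewrite /phi (perm_big _ h). Qed.

Lemma perm_rc (T : eqType) (s : seq T) x : perm_eq (rcons s x) (x :: s).
Proof. by rewrite perm_rcons. Qed.

Lemma take_rc (T : Type) (s : seq T) x : take (size (rcons s x)).-1 (rcons s x) = s.
Proof. by rewrite size_rcons -cats1 take_size_cat. Qed.

Lemma ires_id (k : fieldType) n (bs : seq 'rV[k]_n) :
  size bs = n -> free bs -> ires n bs (phi bs) = 1.
Proof.
elim: n bs => [|n IH] bs sz fr.
  move/size0nil: sz => ->; rewrite /= /phi big_nil tofrac1 invr1.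
  by have := cvalE (1 : k); rewrite mpolyC1 tofrac1.
case/lastP: bs sz fr => [|bs0 a] //= sz fr.
rewrite last_rcons take_rc.
have fr' : free (a :: bs0) by rewrite -(perm_free (perm_rc bs0 a)).
have a0 : a != 0 by apply: (free_not0 fr'); exact: mem_head.
have fm := Q1 (hker a0) fr'.
rewrite /Res (phi_perm (perm_rc bs0 a)) R1 //; last first.
  by move=> v vs; apply: (free_not0 fm); apply: map_f.
apply: IH => //; by rewrite size_map; move: sz; rewrite size_rcons => -[].
Qed.

Lemma rem_filterC (T : eqType) (p : pred T) x (s : seq T) :
  rem x (filter p s) = filter p (rem x s).
Proof.
elim: s => //= y s IH; case: (eqVneq y x) => [->|ne]; case px: (p _) => /=.
- by rewrite eqxx.
- by rewrite rem_id // mem_filter px.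
- by rewrite (negPf ne) px IH.
- by rewrite px IH.
Qed.

Lemma sorted_rc_lt s x : sorted ltn (rcons s x) -> all (fun y => y < x)%N s.
Proof.
elim: s => //= y s IH h.
have := order_path_min ltn_trans h; rewrite all_rcons => /andP[yx _].
by rewrite yx /= IH //; exact: path_sorted h.
Qed.

Lemma perm_swap_rc (T : eqType) (u a : T) L : perm_eq (u :: rcons L a) (a :: u :: L).
Proof. by rewrite -cats1 -cat_cons perm_catC perm_refl. Qed.

Lemma perm_swap2 (T : eqType) (u a : T) L : perm_eq (u :: a :: L) (a :: u :: L).
Proof. by apply/permP => q /=; rewrite addnCA. Qed.

Lemma ires_zero (k : fieldType) n (D : seq 'rV[k]_n) (b b' : seq nat) :
  size b = n -> sorted ltn b ->
  free [seq D`_i | i <- b] -> free [seq D`_i | i <- b'] ->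
  (forall j, j \in b' -> j \notin b -> free (D`_j :: [seq D`_i | i <- b & (j < i)%N])) ->
  (forall j, j \in b -> j \notin b' -> free (D`_j :: [seq D`_i | i <- b' & (j < i)%N])) ->
  has (fun x => x \notin b') b ->
  ires n [seq D`_i | i <- b] (phi [seq D`_i | i <- b']) = 0.
Proof.
elim: n D b b' => [|n IH] D b b' sz so frb frb' c1 c2 hx.
  by move/size0nil: sz hx => ->.
case/lastP: b sz so frb c1 c2 hx => [|b0 ir] // sz so frb c1 c2 hx.
rewrite map_rcons /= last_rcons take_rc.
rewrite map_rcons in frb.
set a := D`_ir.
have fr' : free (a :: [seq D`_i | i <- b0]) by rewrite -(perm_free (perm_rc _ a)).
have a0 : a != 0 by apply: (free_not0 fr'); exact: mem_head.
set p := qmap a.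
have hk := hker a0; have hk2 := hker2 a0.
set D' := map (fun v => v *m p) D.
have nthD' : forall i, D'`_i = D`_i *m p.
  move=> i; case: (ltnP i (size D)) => h; first by rewrite (nth_map 0).
  by rewrite !nth_default ?size_map // mul0mx.
have mapD : forall c, [seq v *m p | v <- [seq D`_i | i <- c]] = [seq D'`_i | i <- c].
  by move=> c; rewrite -map_comp; apply: eq_map => i; rewrite /= nthD'.
have ub' : uniq b' by move/free_uniq: frb' => /map_uniq.
have allb0 := sorted_rc_lt so.
have sob0 : sorted ltn b0 by move: so; rewrite -cats1 => /cat_sorted2 [].
have [irb'|irb'] := boolP (ir \in b').
  have pb' := perm_map (fun i => D`_i) (perm_to_rem irb').
  have frr : free (a :: [seq D`_i | i <- rem ir b']) by rewrite -(perm_free pb').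
  have fmr := Q1 hk frr.
  rewrite /Res (phi_perm pb') R1 //; last first.
    by move=> v vs; apply: (free_not0 fmr); apply: map_f.
  rewrite !mapD; apply: IH => //.
  - by move: sz; rewrite size_rcons => -[].
  - by rewrite -mapD /p; exact: (Q1 hk fr').
  - by rewrite -mapD.
  - move=> j; rewrite mem_rem_uniq // inE => /andP[jir jb'] jb0.
    have jb : j \notin rcons b0 ir by rewrite mem_rcons inE negb_or jir.
    have := c1 j jb' jb; rewrite filter_rcons /=.
    case: (ltnP j ir) => hj.
      rewrite map_rcons (perm_free (perm_swap_rc _ _ _)) => /(Q1 hk).
      by rewrite /= nthD' mapD.
    have -> : [seq i <- b0 | (j < i)%N] = [::].
      apply/eqP; rewrite -size_eq0 size_filter -leqn0 leqNgt -has_count.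
      apply/hasP => -[i ib0 ji]; move/allP: allb0 => /(_ i ib0) iir.
      by have := leq_trans ji (leq_trans (ltnW iir) hj); rewrite ltnn.
    move=> _; rewrite seq1_free nthD'.
    apply: (free_not0 fmr); apply: map_f; apply: map_f.
    by rewrite mem_rem_uniq // inE jir.
  - move=> j jb0; move/allP: allb0 => /(_ j jb0) jir.
    rewrite mem_rem_uniq // inE negb_and (ltn_eqF jir) /= => jb'.
    have jb : j \in rcons b0 ir by rewrite mem_rcons inE jb0 orbT.
    have := c2 j jb jb'.
    have irf : ir \in [seq i <- b' | (j < i)%N] by rewrite mem_filter jir.
    have pf := perm_map (fun i => D`_i) (perm_to_rem irf).
    have pf2 : perm_eq (D`_j :: [seq D`_i | i <- b' & (j < i)%N]) (D`_j :: [seq D`_i | i <- ir :: rem ir [seq i <- b' | (j < i)%N]]) by rewrite perm_cons.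
    rewrite (perm_free pf2) /= (perm_free (perm_swap2 _ _ _)).
    by move=> /(Q1 hk); rewrite /= nthD' rem_filterC mapD.
  - move/hasP: hx => [x]; rewrite mem_rcons inE => /orP[/eqP ->|xb0 xb'].
      by rewrite irb'.
    apply/hasP; exists x => //; apply: contra xb'; exact: mem_rem.
rewrite /Res R0 ?ires0 //; first by apply/hk2; exists 1; rewrite scale1r.
move=> v /mapP [j' jb' ->]; apply/eqP => /hk [x ex].
have irb : ir \in rcons b0 ir by rewrite mem_rcons mem_head.
case: (ltngtP ir j') => h.
- have := c2 ir irb irb' => /P2; apply; last exact: ex.
  by apply: map_f; rewrite mem_filter h.
- have [j'b0|j'b0] := boolP (j' \in b0).
    by apply: (P2 fr') ex; apply: map_f.
  have j'b : j' \notin rcons b0 ir by rewrite mem_rcons inE negb_or j'b0 (ltn_eqF h).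
  have := c1 j' jb' j'b => /P1; apply; last exact: ex.
  by apply: map_f; rewrite mem_filter h.
- by move: irb'; rewrite h jb'.
Qed.

Lemma inB_facts (k : fieldType) r (D : seq 'rV[k]_r) b : inB D b ->
  [/\ sorted ltn b, free [seq D`_i | i <- b], size b = r &
   forall j, (j < size D)%N -> j \notin b -> free (D`_j :: [seq D`_i | i <- b & (j < i)%N])].
Proof.
case/and4P => so ab bas hj; split => //.
- exact: basis_free bas.
- have := @vector.size_basis _ _ fullv _ (in_tuple [seq D`_i | i <- b]) bas.
  by rewrite dimvf /dim /= mul1n size_map => ->.
- move=> j jD jb; move/allP: hj => /(_ j); rewrite mem_iota /= add0n jD (negPf jb).
  by move=> /(_ isT).
Qed.

Theorem mainTheorem10 (k : fieldType) (Hchar : [pchar k] =i pred0)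
  (r : nat) (D : seq 'rV[k]_r)
  (Huniq : uniq D) (Hnz : all (fun a => a != 0) D)
  (Hspan : (<<D>> = fullv)%VS)
  (b b' : seq nat) (Hb : inB D b) (Hb' : inB D b') :
  phiup D b (phib D b') = (if b == b' then 1 else 0).
Proof.
have [so fr sz c1] := inB_facts Hb.
have [so' fr' sz' c1'] := inB_facts Hb'.
have ab : all (fun i => i < size D)%N b by case/and4P: Hb.
have ab' : all (fun i => i < size D)%N b' by case/and4P: Hb'.
rewrite /phiup /phib; case: eqP => [<-|ne].
  by rewrite sz; apply: ires_id => //; rewrite size_map.
rewrite sz; apply: ires_zero => //.
- by move=> j jb' jb; apply: c1 => //; exact: (allP ab').
- by move=> j jb jb'; apply: c1' => //; exact: (allP ab).
apply/negPn/negP => /hasPn h; apply: ne.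
have sub : {subset b <= b'} by move=> x /h; rewrite negbK.
have ub : uniq b := sorted_uniq ltn_trans ltnn so.
have [_ eqi] := uniq_min_size ub sub (eq_leq (etrans sz' (esym sz))).
exact: irr_sorted_eq ltn_trans ltnn _ _ so so' eqi.
Qed.
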